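(* Let $n\ge 4$ and let $G$ be a graph having the maximum value of $cM_2$ among all connected graphs of order $n$. Then the maximum degree of $G$ is $n-1$.
   Context: All graphs are finite and simple. For a graph $G$ and a vertex $u$, $d_u(G)$ denotes the degree of $u$ in $G$. The complementary second Zagreb index of $G$ is $cM_2(G)=\sum_{uv\in E(G)}\left|(d_u(G))^2-(d_v(G))^2\right|$. *)

(* Defs.v *)
From mathcomp Require Import all_boot.
Set Implicit Arguments. Unset Strict Implicit. Unset Printing Implicit Defensive.

Record sgraph (n : nat) := SGraph {
  adj : rel 'I_n;
  adj_sym : symmetric adj;
  adj_irr : irreflexive adj }.

Definition deg n (G : sgraph n) (u : 'I_n) : nat := #|[set v | adj G u v]|.

Definition connected_graph n (G : sgraph n) : Prop :=
  forall u v : 'I_n, connect (adj G) u v.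

(* complementary second Zagreb index: sum over edges uv (each unordered edge
   counted once, via u < v) of |d_u^2 - d_v^2| (written max - min on nat) *)
Definition cM2 n (G : sgraph n) : nat :=
  \sum_(u : 'I_n) \sum_(v : 'I_n | (u < v) && adj G u v)
     (maxn (deg G u ^ 2) (deg G v ^ 2) - minn (deg G u ^ 2) (deg G v ^ 2)).

Definition maxdeg n (G : sgraph n) : nat := \max_(u : 'I_n) deg G u.

(* Main.v *)
Require Import Defs.
From mathcomp Require Import all_boot.
From mathcomp Require Import zify.
Set Implicit Arguments. Unset Strict Implicit. Unset Printing Implicit Defensive.

Definition cc (a b : nat) := maxn (a ^ 2) (b ^ 2) - minn (a ^ 2) (b ^ 2).

Definition FF n (G : sgraph n) (x y : 'I_n) : nat :=
  if adj G x y then cc (deg G x) (deg G y) else 0.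

Lemma FF_sym n (G : sgraph n) x y : FF G x y = FF G y x.
Proof. by rewrite /FF adj_sym /cc maxnC minnC. Qed.

Lemma FF_diag n (G : sgraph n) x : FF G x x = 0.
Proof. by rewrite /FF adj_irr. Qed.

Lemma cM2_double n (G : sgraph n) :
  2 * cM2 G = \sum_x \sum_y FF G x y.
Proof.
have E1 : cM2 G = \sum_(x : 'I_n) \sum_(y : 'I_n) (if x < y then FF G x y else 0).
  rewrite /cM2; apply: eq_bigr => x _; rewrite big_mkcond; apply: eq_bigr => y _.
  by rewrite /FF; case: (x < y); case: (adj G x y).
have E2 : \sum_x \sum_y FF G x y =
   \sum_(x : 'I_n) \sum_(y : 'I_n) (if x < y then FF G x y else 0) +
   \sum_(x : 'I_n) \sum_(y : 'I_n) (if y < x then FF G x y else 0).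
  rewrite -big_split; apply: eq_bigr => x _; rewrite -big_split; apply: eq_bigr => y _ /=.
  case: (ltngtP x y) => [h|h|h].
  - by rewrite addn0.
  - by rewrite add0n.
  - have exy : x = y by apply: val_inj. by rewrite -exy FF_diag.
rewrite E2 -E1 exchange_big /=.
have -> : \sum_(j : 'I_n) \sum_(i : 'I_n) (if j < i then FF G i j else 0) = cM2 G.
  by rewrite E1; apply: eq_bigr => x _; apply: eq_bigr => y _; rewrite FF_sym.
by rewrite mul2n addnn.
Qed.

Lemma row_split (T : finType) (g : T -> nat) u w : u != w ->
  \sum_y g y = g u + g w + \sum_(y | (y != u) && (y != w)) g y.
Proof.
move=> uw; rewrite (bigD1 u) //= (bigD1 w) /=; last by rewrite eq_sym.
by rewrite addnA.
Qed.

Lemma total_split n (F : 'I_n -> 'I_n -> nat) u w :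
  (forall x y, F x y = F y x) -> (forall x, F x x = 0) -> u != w ->
  \sum_x \sum_y F x y + 2 * F u w =
  2 * \sum_y F u y + 2 * \sum_y F w y +
  \sum_(x | (x != u) && (x != w)) \sum_(y | (y != u) && (y != w)) F x y.
Proof.
move=> Fs F0 uw.
rewrite (row_split _ uw).
have -> : \sum_(x | (x != u) && (x != w)) \sum_y F x y =
   \sum_(x | (x != u) && (x != w)) F u x + \sum_(x | (x != u) && (x != w)) F w x +
   \sum_(x | (x != u) && (x != w)) \sum_(y | (y != u) && (y != w)) F x y.
  rewrite -!big_split; apply: eq_bigr => x _ /=.
  by rewrite (row_split (F x) uw) (Fs x u) (Fs x w).
have Hu := row_split (F u) uw. have Hw := row_split (F w) uw.
rewrite F0 in Hu; rewrite F0 (Fs w u) in Hw.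
lia.
Qed.

Section Add.
Variables (n : nat) (G : sgraph n) (u w : 'I_n).
Hypothesis uw : u != w.
Hypothesis nadj : adj G u w = false.

Definition adjH (x y : 'I_n) :=
  adj G x y || ((x == u) && (y == w)) || ((x == w) && (y == u)).

Lemma adjH_sym : symmetric adjH.
Proof.
move=> x y; rewrite /adjH adj_sym.
by case: (x == u); case: (x == w); case: (y == u); case: (y == w);
  rewrite /= ?orbT ?orbF.
Qed.

Lemma adjH_irr : irreflexive adjH.
Proof.
move=> x; rewrite /adjH adj_irr /=.
apply/negP; case/orP => /andP [/eqP e1 /eqP e2].
  by move: uw; rewrite -e1 e2 eqxx.
by move: uw; rewrite -e1 e2 eqxx.
Qed.

Definition H := SGraph adjH_sym adjH_irr.

Lemma H_conn : connected_graph G -> connected_graph H.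
Proof.
move=> cG x y; apply: (connect_sub _ (cG x y)) => a b ab.
by apply: connect1; rewrite /= /adjH ab.
Qed.

Lemma degH_u : deg H u = (deg G u).+1.
Proof.
rewrite /deg (_ : [set v | adj H u v] = w |: [set v | adj G u v]).
  by rewrite cardsU1 inE nadj.
apply/setP => v; rewrite !inE /= /adjH eqxx /= (negbTE uw) /= orbF.
by rewrite orbC.
Qed.

Lemma degH_w : deg H w = (deg G w).+1.
Proof.
rewrite /deg (_ : [set v | adj H w v] = u |: [set v | adj G w v]).
  by rewrite cardsU1 inE adj_sym nadj.
apply/setP => v; rewrite !inE /= /adjH eqxx /= eq_sym (negbTE uw) /=.
by rewrite orbF orbC.
Qed.

Lemma degH_o x : x != u -> x != w -> deg H x = deg G x.
Proof.
move=> xu xw; rewrite /deg; apply: eq_card => v; rewrite !inE /= /adjH.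
by rewrite (negbTE xu) (negbTE xw) /= !orbF.
Qed.

Lemma adjH_o x y : x != u -> x != w -> adj H x y = adj G x y.
Proof. by move=> xu xw; rewrite /= /adjH (negbTE xu) (negbTE xw) /= !orbF. Qed.

End Add.

Lemma deg_le n (G : sgraph n) x : deg G x <= n.-1.
Proof.
have <- : #|[set~ x]| = n.-1 by rewrite cardsC1 card_ord.
rewrite /deg; apply: subset_leq_card.
by apply/subsetP => v; rewrite !inE => h; apply/eqP => e; rewrite e adj_irr in h.
Qed.

Lemma sum_adj n (G : sgraph n) x k :
  \sum_y (if adj G x y then k else 0) = deg G x * k.
Proof.
by rewrite /deg -sum_nat_const [RHS]big_mkcond; apply: eq_bigr => y _; rewrite inE.
Qed.

Lemma sum_pred1 n (y0 : 'I_n) k : \sum_y (if y == y0 then k else 0) = k.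
Proof.
rewrite (bigD1 y0) //= eqxx big1 ?addn0 // => y /negbTE -> //.
Qed.

Theorem proposition1 (n : nat) (G : sgraph n) :
  4 <= n ->
  connected_graph G ->
  (forall H : sgraph n, connected_graph H -> cM2 H <= cM2 G) ->
  maxdeg G = n.-1.
Proof.
move=> n4 cG maxG.
have n0 : 0 < n by lia.
pose i0 := Ordinal n0.
set u := [arg max_(i > i0) deg G i].
have Du : maxdeg G = deg G u by rewrite /maxdeg (bigmax_eq_arg i0).
have leD : forall x, deg G x <= deg G u.
  by move=> x; rewrite -Du /maxdeg; apply: (leq_bigmax x).
apply/eqP; rewrite eqn_leq Du deg_le /=.
rewrite leqNgt; apply/negP => lt.
have [w /andP [wu nuw]] : exists w, (w != u) && ~~ adj G u w.
  case: (boolP [exists w, (w != u) && ~~ adj G u w]) => [/existsP //|/existsPn Hn].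
  exfalso; move: lt; rewrite ltnNge; move/negP; apply.
  have <- : #|[set~ u]| = n.-1 by rewrite cardsC1 card_ord.
  rewrite /deg; apply: subset_leq_card.
  apply/subsetP => v; rewrite !inE => vu.
  by move: (Hn v); rewrite vu /= negbK.
have uw : u != w by rewrite eq_sym.
have nadj : adj G u w = false by apply: negbTE.
have D1 : 0 < deg G u.
  case/connectP: (cG u w) => p pp lp.
  case: p pp lp => [|y p] /=; first by move=> _ e; rewrite e eqxx in uw.
  move=> /andP [uy _] _; rewrite /deg card_gt0; apply/set0Pn; exists y.
  by rewrite inE.
pose HH := H G uw.
have cH : connected_graph HH := H_conn uw cG.
have := maxG HH cH.
rewrite -(leq_pmul2l (isT : 0 < 2)) !cM2_double.
set D := deg G u. set dw := deg G w.
pose g := if dw < D then 2 * dw + 1 else 0.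
pose E := FF HH u w.
have Hrow_u : \sum_y FF HH u y >= \sum_y FF G u y + D * (2 * D + 1) + E.
  rewrite -sum_adj -(sum_pred1 w E) -!big_split /=; apply: leq_sum => y _.
  case: (eqVneq y w) => [->|yw].
    by rewrite {1}/FF nadj !add0n; exact: leqnn.
  rewrite addn0 /FF.
  have -> : adj HH u y = adj G u y by rewrite /= /adjH eqxx (negbTE yw) (negbTE uw) /= !orbF.
  case: ifP => // auy.
  have yu : y != u by apply/eqP => e; rewrite e adj_irr in auy.
  rewrite (degH_u uw nadj) (degH_o G uw yu yw) /cc.
  have := leD y; rewrite -/D; nia.
have Hrow_w : \sum_y FF HH w y + dw * g >= \sum_y FF G w y + E.
  rewrite -sum_adj -big_split -(sum_pred1 u E) -big_split /=; apply: leq_sum => y _.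
  case: (eqVneq y u) => [->|yu].
    by rewrite {1}/FF [adj G w u]adj_sym nadj addn0 add0n /E FF_sym.
  rewrite addn0 /FF.
  have -> : adj HH w y = adj G w y by rewrite /= /adjH eqxx (negbTE yu) eq_sym (negbTE uw) /= !orbF.
  case: ifP => // awy.
  have yw : y != w by apply/eqP => e; rewrite e adj_irr in awy.
  rewrite (degH_w uw nadj) (degH_o G uw yu yw) /cc /g -/dw.
  have := leD y; have := leD w; rewrite -/D -/dw.
  case: ifP => h; nia.
have Hg : dw * g < D * (2 * D + 1).
  rewrite /g; case: ifP => h; nia.
have TG := total_split (FF_sym G) (FF_diag G) uw.
have TH := total_split (FF_sym HH) (FF_diag HH) uw.
have Rest : \sum_(x | (x != u) && (x != w)) \sum_(y | (y != u) && (y != w)) FF HH x y =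
            \sum_(x | (x != u) && (x != w)) \sum_(y | (y != u) && (y != w)) FF G x y.
  apply: eq_bigr => x /andP [xu xw]; apply: eq_bigr => y /andP [yu yw].
  by rewrite /FF (adjH_o G uw y xu xw) (degH_o G uw xu xw) (degH_o G uw yu yw).
rewrite /FF nadj in TG.
rewrite Rest -/E in TH.
move: TG TH Hrow_u Hrow_w Hg.
set a := \sum_x \sum_y FF G x y.
set b := \sum_x \sum_y FF HH x y.
set c := \sum_(x | (x != u) && (x != w)) \sum_(y | (y != u) && (y != w)) FF G x y.
set r1 := \sum_y FF HH u y. set r2 := \sum_y FF HH w y.
set s1 := \sum_y FF G u y. set s2 := \sum_y FF G w y.
set p := dw * g. set q := D * (2 * D + 1).
lia.
Qed.
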